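(* Let $\varphi:R\to S$ be a morphism of (unital) rings, let $\varphi_*:{}_S\mathcal{M}\to{}_R\mathcal{M}$ be the restriction of scalars functor and $\varphi^*=S\otimes_R\bullet:{}_R\mathcal{M}\to{}_S\mathcal{M}$ the extension of scalars functor. 1. $\varphi_*$ is naturally full if and only if it is full. 2. The following are equivalent: (a) $\varphi^*$ is naturally full; (b) there exists an $R$-bimodule map $E:S\to R$ such that $\varphi\circ E=\mathrm{id}_S$; (c) there exists a central idempotent $e$ of $R$ and a ring isomorphism $S\cong Re$ under which $\varphi$ corresponds to the projection $R\to Re$, $r\mapsto re$.
   Context: ${}_R\mathcal{M}$ denotes the category of left $R$-modules. For a functor $F:\mathcal{A}\to\mathcal{B}$, $F$ is called naturally full if there is a family of maps $\mathcal{P}_{A,A'}:\mathrm{Hom}_{\mathcal{B}}(F(A),F(A'))\to\mathrm{Hom}_{\mathcal{A}}(A,A')$, natural in $A$ and $A'$ (i.e. $\mathcal{P}_{X,T}(F(h)\circ g\circ F(f))=h\circ\mathcal{P}_{Y,Z}(g)\circ f$), such that $F(\mathcal{P}_{A,A'}(u))=u$ for all $u$. *)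

(* Defs.v *)
Set Warnings "-notation-overridden -ambiguous-paths -redundant-canonical-projection".
From HB Require Import structures.
From mathcomp Require Import all_boot all_algebra.
From mathcomp Require Import boolp.

Set Implicit Arguments.
Unset Strict Implicit.
Unset Printing Implicit Defensive.

Import GRing.Theory.
Local Open Scope ring_scope.

Definition full (A B : pzRingType) (F0 : lmodType A -> lmodType B)
  (F1 : forall M N : lmodType A, {linear M -> N} -> {linear F0 M -> F0 N}) :=
  forall (M N : lmodType A) (u : {linear F0 M -> F0 N}),
    exists f : {linear M -> N}, F1 M N f =1 u.

Definition naturally_full (A B : pzRingType) (F0 : lmodType A -> lmodType B)
  (F1 : forall M N : lmodType A, {linear M -> N} -> {linear F0 M -> F0 N}) :=
  exists P : forall M N : lmodType A, {linear F0 M -> F0 N} -> {linear M -> N},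
    (forall (X Y Z T : lmodType A) (f : {linear X -> Y})
            (g : {linear F0 Y -> F0 Z}) (h : {linear Z -> T}),
        P X T (F1 Z T h \o g \o F1 X Y f : {linear F0 X -> F0 T})
          =1 h \o P Y Z g \o f) /\
    (forall (M N : lmodType A) (u : {linear F0 M -> F0 N}),
        F1 M N (P M N u) =1 u).

Arguments full {A B} F0 F1.
Arguments naturally_full {A B} F0 F1.

Section Restriction.
Variables (R S : pzRingType) (phi : {rmorphism R -> S}).

Definition restr_type (M : lmodType S) : Type := M.

Section Obj.
Variable M : lmodType S.
HB.instance Definition _ := GRing.Zmodule.on (restr_type M).
Definition restr_scale (r : R) (m : restr_type M) : restr_type M := phi r *: (m : M).
Fact restr_scalerA a b v : restr_scale a (restr_scale b v) = restr_scale (a * b) v.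
Proof. by rewrite /restr_scale scalerA rmorphM. Qed.
Fact restr_scale1r : left_id 1 restr_scale.
Proof. by move=> v; rewrite /restr_scale rmorph1 scale1r. Qed.
Fact restr_scalerDr : right_distributive restr_scale +%R.
Proof. by move=> a u v; rewrite /restr_scale scalerDr. Qed.
Fact restr_scalerDl v : {morph restr_scale^~ v : a b / a + b}.
Proof. by move=> a b; rewrite /restr_scale rmorphD scalerDl. Qed.
HB.instance Definition _ := GRing.Zmodule_isLmodule.Build R (restr_type M)
  restr_scalerA restr_scale1r restr_scalerDr restr_scalerDl.
End Obj.

Definition restr (M : lmodType S) : lmodType R := restr_type M.

Section Mor.
Variables (M N : lmodType S) (f : {linear M -> N}).
Definition restr_fun : restr M -> restr N := fun m => f m.
Fact restr_fun_linear : linear restr_fun.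
Proof. by move=> r u v; rewrite /restr_fun /= linearP. Qed.
HB.instance Definition _ := GRing.isLinear.Build R (restr M) (restr N) _ restr_fun
  restr_fun_linear.
End Mor.

Definition restr_mor (M N : lmodType S) (f : {linear M -> N}) :
  {linear restr M -> restr N} := restr_fun f.

End Restriction.

(* Extension of scalars  S (x)_R M, built as the quotient of the free  *)
(* commutative monoid of formal sums  seq (S * M)  by the congruence   *)
(* generated by the usual defining relations of the tensor product:    *)
Section Extension.
Variables (R S : pzRingType) (phi : {rmorphism R -> S}).

Inductive tens_rel (M : lmodType R) : seq (S * M) -> seq (S * M) -> Prop :=
| tr_refl x : tens_rel x x
| tr_sym x y : tens_rel x y -> tens_rel y x
| tr_trans x y z : tens_rel x y -> tens_rel y z -> tens_rel x z
| tr_catl x y z : tens_rel x y -> tens_rel (z ++ x) (z ++ y)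
| tr_catr x y z : tens_rel x y -> tens_rel (x ++ z) (y ++ z)
| tr_swap a b : tens_rel [:: a; b] [:: b; a]
| tr_addl s1 s2 m : tens_rel [:: (s1 + s2, m)] [:: (s1, m); (s2, m)]
| tr_addr s m1 m2 : tens_rel [:: (s, m1 + m2)] [:: (s, m1); (s, m2)]
| tr_bal s r m : tens_rel [:: (s * phi r, m)] [:: (s, r *: m)]
| tr_zero m : tens_rel [:: (0, m)] [::].

Lemma tr_map (M N : lmodType R) (g : S * M -> S * N) :
  (forall s1 s2 m, tens_rel [:: g (s1 + s2, m)] [:: g (s1, m); g (s2, m)]) ->
  (forall s m1 m2, tens_rel [:: g (s, m1 + m2)] [:: g (s, m1); g (s, m2)]) ->
  (forall s r m, tens_rel [:: g (s * phi r, m)] [:: g (s, r *: m)]) ->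
  (forall m, tens_rel [:: g (0, m)] [::]) ->
  forall x y, tens_rel x y -> tens_rel (map g x) (map g y).
Proof.
move=> h1 h2 h3 h4 x y; elim=> /=.
- by move=> ?; apply: tr_refl.
- by move=> ? ? _; apply: tr_sym.
- by move=> ? ? ? _ H1 _ H2; apply: tr_trans H1 H2.
- by move=> ? ? z _ H; rewrite !map_cat; apply: tr_catl.
- by move=> ? ? z _ H; rewrite !map_cat; apply: tr_catr.
- by move=> ? ?; apply: tr_swap.
- by [].
- by [].
- by [].
- by [].
Qed.

Section Obj.
Variable M : lmodType R.
Local Notation X := (S * M)%type.
Local Notation tr := (@tens_rel M).

Lemma tr_consC (a : X) y : tr (a :: y) (y ++ [:: a]).
Proof.
elim: y => [|b y IH] /=; first exact: tr_refl.
apply: (@tr_trans _ _ (b :: a :: y)).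
  by apply: (@tr_catr _ [:: a; b] [:: b; a] y); apply: tr_swap.
by apply: (@tr_catl _ (a :: y) (y ++ [:: a]) [:: b]).
Qed.

Lemma tr_catC x y : tr (x ++ y) (y ++ x).
Proof.
elim: x => [|a x IH] /=; first by rewrite cats0; apply: tr_refl.
apply: (@tr_trans _ _ (a :: (y ++ x))).
  by apply: (@tr_catl _ _ _ [:: a]).
rewrite -cat1s catA; apply: (@tr_trans _ _ ((y ++ [:: a]) ++ x)).
  by apply: tr_catr; apply: tr_consC.
by rewrite -catA; apply: tr_refl.
Qed.

Definition tens_type := {A : seq X -> Prop | exists x, A = tr x}.

HB.instance Definition _ := gen_eqMixin tens_type.
HB.instance Definition _ := gen_choiceMixin tens_type.

Definition tcl (x : seq X) : tens_type := exist _ (tr x) (ex_intro _ x erefl).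
Definition trep (a : tens_type) : seq X := projT1 (cid (svalP a)).

Lemma trepK a : tcl (trep a) = a.
Proof.
rewrite /trep; case: cid => x /= e; case: a e => A pA /= e; subst A.
by rewrite /tcl; congr exist; apply: Prop_irrelevance.
Qed.

Lemma tcl_eq x y : tcl x = tcl y <-> tr x y.
Proof.
split.
  by move=> /(congr1 sval) /= e; rewrite e; apply: tr_refl.
move=> H; rewrite /tcl; have e : tr x = tr y.
  apply: funext => z; apply: propext; split => Hz.
    by apply: tr_trans (tr_sym H) Hz.
  by apply: tr_trans H Hz.
by move: (ex_intro _ x _); rewrite e => ?; congr exist; apply: Prop_irrelevance.
Qed.

Lemma tens_ind (P : tens_type -> Prop) : (forall x, P (tcl x)) -> forall a, P a.
Proof. by move=> H a; rewrite -(trepK a). Qed.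

Lemma trep_tcl x : tr (trep (tcl x)) x.
Proof. by apply/tcl_eq; rewrite trepK. Qed.

Definition tadd a b := tcl (trep a ++ trep b).
Definition tzero := tcl [::].
Definition topp a := tcl (map (fun p : X => (- p.1, p.2)) (trep a)).
Definition tscale (s : S) a := tcl (map (fun p : X => (s * p.1, p.2)) (trep a)).

Lemma taddE x y : tadd (tcl x) (tcl y) = tcl (x ++ y).
Proof.
apply/tcl_eq; apply: tr_trans (tr_catr _ (trep_tcl x)) _.
exact: tr_catl (trep_tcl y).
Qed.

Lemma toppE x : topp (tcl x) = tcl (map (fun p : X => (- p.1, p.2)) x).
Proof.
apply/tcl_eq; apply: tr_map (trep_tcl x) => /=.
- by move=> s1 s2 m; rewrite opprD; apply: tr_addl.
- by move=> s m1 m2; apply: tr_addr.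
- by move=> s r m; rewrite -mulNr; apply: tr_bal.
- by move=> m; rewrite oppr0; apply: tr_zero.
Qed.

Lemma tscaleE s x : tscale s (tcl x) = tcl (map (fun p : X => (s * p.1, p.2)) x).
Proof.
apply/tcl_eq; apply: tr_map (trep_tcl x) => /=.
- by move=> s1 s2 m; rewrite mulrDr; apply: tr_addl.
- by move=> s' m1 m2; apply: tr_addr.
- by move=> s' r m; rewrite mulrA; apply: tr_bal.
- by move=> m; rewrite mulr0; apply: tr_zero.
Qed.

Fact taddA : associative tadd.
Proof.
by elim/tens_ind=> x; elim/tens_ind=> y; elim/tens_ind=> z; rewrite !taddE catA.
Qed.
Fact taddC : commutative tadd.
Proof. by elim/tens_ind=> x; elim/tens_ind=> y; rewrite !taddE; apply/tcl_eq/tr_catC. Qed.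
Fact tadd0 : left_id tzero tadd.
Proof. by elim/tens_ind=> x; rewrite /tzero taddE. Qed.

HB.instance Definition _ := GRing.isNmodule.Build tens_type taddA taddC tadd0.

Fact taddN : left_inverse tzero topp tadd.
Proof.
elim/tens_ind=> x; elim: x => [|[s m] x IH].
  by rewrite toppE /= /tzero taddE.
rewrite toppE /= -cat1s -taddE -toppE (_ : (s, m) :: x = [:: (s, m)] ++ x) // -taddE.
change (tadd ?u ?w) with (u + w) in IH |- *.
rewrite addrACA IH; change tzero with (0 : tens_type); rewrite addr0.
change (?u + ?w) with (tadd u w); rewrite taddE /=; apply/tcl_eq.
apply: tr_trans (tr_sym (tr_addl _ _ _)) _.
by rewrite addNr; apply: tr_zero.
Qed.

HB.instance Definition _ := GRing.Nmodule_isZmodule.Build tens_type taddN.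

Fact tscaleA a b v : tscale a (tscale b v) = tscale (a * b) v.
Proof. by elim/tens_ind: v => x; rewrite !tscaleE -map_comp; congr tcl; apply: eq_map => -[? ?] /=; rewrite mulrA. Qed.
Fact tscale1 : left_id 1 tscale.
Proof. by elim/tens_ind=> x; rewrite tscaleE; congr tcl; rewrite -[RHS]map_id; apply: eq_map => -[? ?] /=; rewrite mul1r. Qed.
Fact tscaleDr : right_distributive tscale +%R.
Proof. by move=> s; elim/tens_ind=> x; elim/tens_ind=> y; rewrite /GRing.add /= taddE !tscaleE taddE map_cat. Qed.
Fact tscaleDl v : {morph tscale^~ v : a b / a + b}.
Proof.
move=> a b; elim/tens_ind: v => x; elim: x => [|[s m] x IH].
  by rewrite !tscaleE /= /GRing.add /= taddE.
rewrite -cat1s -taddE; change (tadd ?u ?w) with (u + w).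
have D c u w : tscale c (u + w) = tscale c u + tscale c w by apply: tscaleDr.
rewrite !D IH addrACA; congr (_ + _); rewrite !tscaleE /= /GRing.add /= taddE.
by apply/tcl_eq; rewrite mulrDl; apply: tr_addl.
Qed.

HB.instance Definition _ := GRing.Zmodule_isLmodule.Build S tens_type
  tscaleA tscale1 tscaleDr tscaleDl.
End Obj.

Definition ext (M : lmodType R) : lmodType S := tens_type M.

Section Mor.
Variables (M N : lmodType R) (f : {linear M -> N}).
Definition ext_fun (a : ext M) : ext N :=
  tcl (map (fun p : S * M => (p.1, f p.2)) (trep a)).

Lemma ext_funE x : ext_fun (tcl x) = tcl (map (fun p : S * M => (p.1, f p.2)) x).
Proof.
apply/tcl_eq; apply: tr_map (trep_tcl x) => /=.
- by move=> s1 s2 m; apply: tr_addl.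
- by move=> s m1 m2; rewrite linearD; apply: tr_addr.
- by move=> s r m; rewrite linearZ; apply: tr_bal.
- by move=> m; apply: tr_zero.
Qed.

Fact ext_fun_linear : linear ext_fun.
Proof.
move=> s; elim/tens_ind=> x; elim/tens_ind=> y.
rewrite /GRing.add /GRing.scale /= tscaleE taddE ext_funE !ext_funE tscaleE taddE.
by rewrite map_cat -!map_comp.
Qed.

HB.instance Definition _ := GRing.isLinear.Build S (ext M) (ext N) _ ext_fun
  ext_fun_linear.
End Mor.

Definition ext_mor (M N : lmodType R) (f : {linear M -> N}) :
  {linear ext M -> ext N} := ext_fun f.

End Extension.

(* Main.v *)
Set Warnings "-notation-overridden -ambiguous-paths -redundant-canonical-projection".
Require Import Defs.
From HB Require Import structures.
From mathcomp Require Import all_boot all_algebra.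
From mathcomp Require Import boolp.
Import GRing.Theory.
Local Open Scope ring_scope.
Set Implicit Arguments.
Unset Strict Implicit.
Unset Printing Implicit Defensive.

Lemma lin_eq (R : pzRingType) (U V : lmodType R) (f g : {linear U -> V}) : f =1 g -> f = g.
Proof.
move=> /funext; case: f => f cf; case: g => g cg /= e; subst g.
congr GRing.Linear.Pack. case: cf cg => [[a] [b]] [[c] [d]]; f_equal; f_equal; apply: Prop_irrelevance.
Qed.

Lemma part1 (R S : pzRingType) (phi : {rmorphism R -> S}) :
  naturally_full (restr phi) (restr_mor phi) <-> full (restr phi) (restr_mor phi).
Proof.
split.
  by case=> P [_ H] M N u; exists (P M N u); apply: H.
move=> H.
exists (fun M N u => projT1 (cid (H M N u))); split.
  move=> X Y Z T f g h x /=.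
  case: cid => w /= Hw; case: cid => v /= Hv.
  have := Hw x; have := Hv (f x); rewrite /restr_mor /restr_fun /= => <- <-; done.
by move=> M N u; case: cid.
Qed.

Section BC.
Variables (R S : pzRingType) (phi : {rmorphism R -> S}).
Lemma partBC :
  ((exists E : S -> R,
       (forall x y : S, E (x + y) = E x + E y) /\
       (forall (r : R) (s : S), E (phi r * s) = r * E s) /\
       (forall (s : S) (r : R), E (s * phi r) = E s * r) /\
       (forall s : S, phi (E s) = s)) <->
   exists e : R,
     e * e = e /\ (forall r : R, r * e = e * r) /\
     exists psi : S -> R,
       (forall x y : S, psi (x + y) = psi x + psi y) /\
       (forall x y : S, psi (x * y) = psi x * psi y) /\
       psi 1 = e /\
       injective psi /\
       (forall s : S, psi s * e = psi s) /\
       (forall r : R, exists s : S, psi s = r * e) /\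
       (forall r : R, psi (phi r) = r * e)).
Proof.
split.
  case=> E [ED [EL [ER Ephi]]].
  have Ep r : E (phi r) = r * E 1 by rewrite -[phi r]mulr1 EL.
  have Ep' r : E (phi r) = E 1 * r by rewrite -[phi r]mul1r ER.
  exists (E 1); split; first by rewrite -Ep Ephi.
  split; first by move=> r; rewrite -Ep -Ep'.
  exists E; split; first by [].
  split; first by move=> x y; rewrite -{1}(Ephi x) EL.
  split; first by [].
  split; first by move=> x y /(congr1 phi); rewrite !Ephi.
  split; first by move=> s; rewrite -ER Ephi mulr1.
  split; first by move=> r; exists (phi r).
  by [].
case=> e [ee [ec [psi [pD [pM [p1 [pinj [pe [psurj pphi]]]]]]]]].
have Ephi s : phi (psi s) = s by apply: pinj; rewrite pphi pe.
exists psi; split; first by [].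
split; first by move=> r s; rewrite pM pphi -mulrA -ec pe.
split; first by move=> s r; rewrite pM pphi ec mulrA pe.
by [].
Qed.
End BC.
Section Ten.
Variables (R S : pzRingType) (phi : {rmorphism R -> S}).

Lemma tclD (M : lmodType R) x y : (tcl phi x + tcl phi y : ext phi M) = tcl phi (x ++ y).
Proof. exact: taddE. Qed.
Lemma tclZ (M : lmodType R) s x :
  (s *: tcl phi x : ext phi M) = tcl phi (map (fun p : S * M => (s * p.1, p.2)) x).
Proof. exact: tscaleE. Qed.
Lemma tcl0 (M : lmodType R) : (0 : ext phi M) = tcl phi [::].
Proof. by []. Qed.
Lemma tcl_cons (M : lmodType R) (p : S * M) x :
  tcl phi (p :: x) = tcl phi [:: p] + tcl phi x.
Proof. by rewrite tclD. Qed.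
Lemma tcl1 (M : lmodType R) (s : S) (m : M) : tcl phi [:: (s, m)] = s *: tcl phi [:: (1, m)].
Proof. by rewrite tclZ /= mulr1. Qed.
Lemma tcl_bal (M : lmodType R) (s : S) r (m : M) :
  tcl phi [:: (s * phi r, m)] = tcl phi [:: (s, r *: m)].
Proof. by apply/tcl_eq; apply: tr_bal. Qed.
Lemma tcl_addr (M : lmodType R) (s : S) (m1 m2 : M) :
  tcl phi [:: (s, m1 + m2)] = tcl phi [:: (s, m1)] + tcl phi [:: (s, m2)].
Proof. by rewrite tclD; apply/tcl_eq; apply: tr_addr. Qed.

Lemma ext_mor_tcl (M N : lmodType R) (f : {linear M -> N}) x :
  ext_mor phi f (tcl phi x) = tcl phi (map (fun p : S * M => (p.1, f p.2)) x).
Proof. exact: ext_funE. Qed.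

Section Lift.
Variables (M : lmodType R) (V : zmodType) (g : S -> M -> V).
Hypotheses (gDl : forall s1 s2 m, g (s1 + s2) m = g s1 m + g s2 m)
  (gDr : forall s m1 m2, g s (m1 + m2) = g s m1 + g s m2)
  (gbal : forall s r m, g (s * phi r) m = g s (r *: m))
  (g0 : forall m, g 0 m = 0).
Definition lsum (x : seq (S * M)) := \sum_(p <- x) g p.1 p.2.
Lemma lsum_rel x y : tens_rel phi x y -> lsum x = lsum y.
Proof.
rewrite /lsum; elim => //=.
- by move=> ? ? ? _ -> _ ->.
- by move=> ? ? z _ H; rewrite !big_cat /= H.
- by move=> ? ? z _ H; rewrite !big_cat /= H.
- by move=> a b; rewrite !big_cons !big_nil !addr0 addrC.
- by move=> s1 s2 m; rewrite !big_cons !big_nil /= gDl !addr0.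
- by move=> s m1 m2; rewrite !big_cons !big_nil /= gDr !addr0.
- by move=> s r m; rewrite !big_cons !big_nil /= gbal.
- by move=> m; rewrite !big_cons !big_nil /= g0 addr0.
Qed.
Definition tlift (a : ext phi M) : V := lsum (trep a).
Lemma liftE x : tlift (tcl phi x) = lsum x.
Proof. exact: lsum_rel (trep_tcl phi x). Qed.
Lemma lift_add a b : tlift (a + b) = tlift a + tlift b.
Proof.
by elim/tens_ind: a => x; elim/tens_ind: b => y; rewrite tclD !liftE /lsum big_cat.
Qed.
End Lift.

Section BA.
Variable E : S -> R.
Hypotheses (ED : forall x y : S, E (x + y) = E x + E y)
  (EL : forall (r : R) (s : S), E (phi r * s) = r * E s)
  (ER : forall (s : S) (r : R), E (s * phi r) = E s * r)
  (Ephi : forall s : S, phi (E s) = s).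

Lemma E0 : E 0 = 0.
Proof. by apply/eqP; rewrite -(addrI (E 0) (_ : E 0 + E 0 = E 0 + 0)) // -ED !addr0. Qed.

Section Mu.
Variable N : lmodType R.
Let g := fun (s : S) (n : N) => E s *: n.
Let gDl s1 s2 m : g (s1 + s2) m = g s1 m + g s2 m.
Proof. by rewrite /g ED scalerDl. Qed.
Let gDr s m1 m2 : g s (m1 + m2) = g s m1 + g s m2.
Proof. by rewrite /g scalerDr. Qed.
Let gbal s r m : g (s * phi r) m = g s (r *: m).
Proof. by rewrite /g ER scalerA. Qed.
Let g0 m : g 0 m = 0.
Proof. by rewrite /g E0 scale0r. Qed.
Definition mu (a : ext phi N) : N := tlift g a.
Lemma mu_tcl x : mu (tcl phi x) = \sum_(p <- x) E p.1 *: p.2.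
Proof. exact: (liftE gDl gDr gbal g0). Qed.
Lemma mu_add a b : mu (a + b) = mu a + mu b.
Proof. exact: (lift_add gDl gDr gbal g0). Qed.
Lemma mu_scale r a : mu (phi r *: a) = r *: mu a.
Proof.
elim/tens_ind: a => x; rewrite tclZ !mu_tcl big_map scaler_sumr.
by apply: eq_bigr => -[s n] _ /=; rewrite EL scalerA.
Qed.
Definition one (m : N) : ext phi N := tcl phi [:: (1, m)].
Lemma one0 : one 0 = 0.
Proof.
have h := tcl_addr 1 (0 : N) 0; rewrite addr0 in h.
by apply/eqP; rewrite -(addrI (one 0) (_ : one 0 + one 0 = one 0 + 0)) // addr0.
Qed.
Lemma tcl_mu b : one (mu b) = b.
Proof.
elim/tens_ind: b => x; elim: x => [|[s m] x IH].
  by rewrite mu_tcl big_nil one0.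
rewrite mu_tcl big_cons -mu_tcl /one tcl_addr; rewrite /one in IH; rewrite IH /= [in RHS]tcl_cons.
by rewrite -tcl_bal mul1r Ephi.
Qed.
End Mu.

Lemma mu_nat (Z T : lmodType R) (h : {linear Z -> T}) b :
  mu (ext_mor phi h b) = h (mu b).
Proof.
elim/tens_ind: b => x; rewrite ext_mor_tcl !mu_tcl big_map linear_sum.
by apply: eq_bigr => -[s n] _ /=; rewrite linearZ.
Qed.

Lemma one_lin (M : lmodType R) r (m m' : M) : one (r *: m + m') = phi r *: one m + one m'.
Proof. by rewrite /one tcl_addr -tcl_bal mul1r [tcl _ [:: (phi r, m)]]tcl1. Qed.

Section PP.
Variables (M N : lmodType R) (u : {linear ext phi M -> ext phi N}).
Definition Pfun (m : M) : N := mu (u (one m)).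
Fact Pfun_linear : linear Pfun.
Proof. by move=> r x y; rewrite /Pfun one_lin linearP mu_add mu_scale. Qed.
HB.instance Definition _ := GRing.isLinear.Build R M N _ Pfun Pfun_linear.
Definition Plin : {linear M -> N} := Pfun.
End PP.

Lemma BA : naturally_full (ext phi) (ext_mor phi).
Proof.
exists Plin; split.
  move=> X Y Z T f g h x /=.
  by rewrite /Plin /Pfun /= /one ext_mor_tcl /= mu_nat.
move=> M N u a; elim/tens_ind: a => x; elim: x => [|[s m] x IH].
  by rewrite -tcl0 !linear0.
rewrite tcl_cons !linearD IH; congr (_ + _).
rewrite ext_mor_tcl /= tcl1 -/(one _) /Plin /Pfun /= tcl_mu.
by rewrite (tcl1 s m) linearZ.
Qed.
End BA.
End Ten.
Section AB.
Variables (R S : pzRingType) (phi : {rmorphism R -> S}).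
Local Notation Ro := (R^o : lmodType R).
Local Notation A := (ext phi Ro).

Let g := fun (s : S) (x : Ro) => s * phi x.
Let gDl s1 s2 m : g (s1 + s2) m = g s1 m + g s2 m.
Proof. by rewrite /g mulrDl. Qed.
Let gDr s m1 m2 : g s (m1 + m2) = g s m1 + g s m2.
Proof. by rewrite /g rmorphD mulrDr. Qed.
Let gbal s r m : g (s * phi r) m = g s (r *: m).
Proof. by rewrite /g -mulrA -rmorphM. Qed.
Let g0 m : g 0 m = 0.
Proof. by rewrite /g mul0r. Qed.
Definition mm (a : A) : S := tlift g a.
Lemma mm_tcl x : mm (tcl phi x) = \sum_(p <- x) p.1 * phi p.2.
Proof. exact: (liftE gDl gDr gbal g0). Qed.
Lemma mm_add a b : mm (a + b) = mm a + mm b.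
Proof. exact: (lift_add gDl gDr gbal g0). Qed.
Lemma mm_scale c a : mm (c *: a) = c * mm a.
Proof.
elim/tens_ind: a => x; rewrite tclZ !mm_tcl big_map mulr_sumr.
by apply: eq_bigr => -[s n] _ /=; rewrite mulrA.
Qed.
Definition one1 : A := tcl phi [:: (1, 1 : Ro)].
Lemma mm_one1 : mm one1 = 1.
Proof. by rewrite mm_tcl big_cons big_nil /= rmorph1 mul1r addr0. Qed.
Lemma key a : a = mm a *: one1.
Proof.
elim/tens_ind: a => x; elim: x => [|[s y] x IH].
  by rewrite mm_tcl big_nil scale0r.
rewrite tcl_cons mm_add scalerDl -IH; congr (_ + _) => /=. rewrite mm_tcl big_cons big_nil addr0 /=.
rewrite /one1 -tcl1 tcl_bal; congr (tcl _ [:: (_, _)]).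
by rewrite /GRing.scale /= mulr1.
Qed.

Definition rhof (s : S) (a : A) : A := (mm a * s) *: one1.
Fact rhof_linear s : linear (rhof s).
Proof. move=> c a b; by rewrite /rhof mm_add mm_scale mulrDl scalerDl scalerA mulrA. Qed.
HB.instance Definition _ s := GRing.isLinear.Build S A A _ (rhof s) (rhof_linear s).
Definition rho s : {linear A -> A} := rhof s.

Definition lamf (r : R) (x : Ro) : Ro := x * r.
Fact lamf_linear r : linear (lamf r).
Proof. by move=> c a b; rewrite /lamf mulrDl /GRing.scale /= mulrA. Qed.
HB.instance Definition _ r := GRing.isLinear.Build R Ro Ro _ (lamf r) (lamf_linear r).
Definition lam r : {linear Ro -> Ro} := lamf r.

Lemma ext_id a : ext_mor phi (idfun : {linear Ro -> Ro}) a = a.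
Proof.
elim/tens_ind: a => x; rewrite ext_mor_tcl; congr (tcl _ _).
by elim: x => //= -[s y] x ->.
Qed.

Lemma mm_lam r a : mm (ext_mor phi (lam r) a) = mm a * phi r.
Proof.
elim/tens_ind: a => x; rewrite ext_mor_tcl !mm_tcl big_map mulr_suml.
by apply: eq_bigr => -[s n] _ /=; rewrite /lamf rmorphM mulrA.
Qed.

Lemma AB : naturally_full (ext phi) (ext_mor phi) ->
     exists E : S -> R,
       (forall x y : S, E (x + y) = E x + E y) /\
       (forall (r : R) (s : S), E (phi r * s) = r * E s) /\
       (forall (s : S) (r : R), E (s * phi r) = E s * r) /\
       (forall s : S, phi (E s) = s).
Proof.
case=> P [HN HP].
pose E s : R := P Ro Ro (rho s) 1.
have Ephi s : phi (E s) = s.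
  have := HP _ _ (rho s) one1.
  rewrite /one1 ext_mor_tcl /= -/one1 => /(congr1 mm).
  rewrite mm_tcl big_cons big_nil /= mul1r addr0 => ->.
  by rewrite /= /rhof mm_scale mm_one1 mul1r mulr1.
have EL r s : E (phi r * s) = r * E s.
  have eq : rho (phi r * s) = (ext_mor phi (idfun : {linear Ro -> Ro}) \o rho s \o ext_mor phi (lam r) : {linear A -> A}).
    apply: lin_eq => a /=; rewrite ext_id /rhof mm_lam mulrA //.
  have := HN _ _ _ _ (lam r) (rho s) idfun 1; rewrite -eq /= => HH; rewrite /E HH.
  rewrite /lamf mul1r.
  rewrite -[in LHS](mulr1 r).
  by rewrite -[r * 1]/(r *: (1 : Ro)) linearZ.
have ER s r : E (s * phi r) = E s * r.
  have eq : rho (s * phi r) = (ext_mor phi (lam r) \o rho s \o ext_mor phi (idfun : {linear Ro -> Ro}) : {linear A -> A}).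
    apply: lin_eq => a /=; rewrite ext_id /rhof linearZ /=.
    rewrite [ext_mor phi (lam r) one1]key mm_lam mm_one1 mul1r scalerA mulrA //.
  by have := HN _ _ _ _ idfun (rho s) (lam r) 1; rewrite -eq /= => HH; rewrite /E HH.
have E0 : E 0 = 0 by rewrite -(mulr0 (0 : S)) -(rmorph0 phi) ER mulr0.
have Ep r : E (phi r) = r * E 1 by rewrite -[phi r]mulr1 EL.
have Ee x : E x = E x * E 1 by rewrite -Ep Ephi.
exists E; split; last by [].
move=> x y; rewrite -{1}(Ephi x) -{1}(Ephi y) -rmorphD Ep mulrDl -!Ee //.
Qed.
End AB.

Theorem proposition3p1 (R S : pzRingType) (phi : {rmorphism R -> S}) :
  (* 1. restriction of scalars phi_* : S-Mod -> R-Mod *)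
  (naturally_full (restr phi) (restr_mor phi) <-> full (restr phi) (restr_mor phi))
  /\
  (* 2. (a) <-> (b) for extension of scalars phi^* = S (x)_R - : R-Mod -> S-Mod *)
  (naturally_full (ext phi) (ext_mor phi) <->
     exists E : S -> R,
       (forall x y : S, E (x + y) = E x + E y) /\
       (forall (r : R) (s : S), E (phi r * s) = r * E s) /\
       (forall (s : S) (r : R), E (s * phi r) = E s * r) /\
       (forall s : S, phi (E s) = s))
  /\
  (* 2. (b) <-> (c) *)
  ((exists E : S -> R,
       (forall x y : S, E (x + y) = E x + E y) /\
       (forall (r : R) (s : S), E (phi r * s) = r * E s) /\
       (forall (s : S) (r : R), E (s * phi r) = E s * r) /\
       (forall s : S, phi (E s) = s)) <->
   exists e : R,
     e * e = e /\ (forall r : R, r * e = e * r) /\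
     exists psi : S -> R,
       (* psi is a ring isomorphism from S onto the ring R e (unit e) *)
       (forall x y : S, psi (x + y) = psi x + psi y) /\
       (forall x y : S, psi (x * y) = psi x * psi y) /\
       psi 1 = e /\
       injective psi /\
       (forall s : S, psi s * e = psi s) /\
       (forall r : R, exists s : S, psi s = r * e) /\
       (* under which phi corresponds to the projection r |-> r e *)
       (forall r : R, psi (phi r) = r * e)).
Proof.
split; first exact: part1.
split; last exact: partBC.
split; first exact: AB.
by case=> E [ED [EL [ER Ephi]]]; exact: (BA ED EL ER Ephi).
Qed.
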